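(* Let $\mathbf K$ be the linearly ordered set obtained from the lexicographic product $\mathbb N\ltimes\mathbb N$ (elements $m\ltimes n$ with $m,n\in\mathbb N$, ordered by $m\ltimes n< m'\ltimes n'$ iff $m<m'$, or $m=m'$ and $n<n'$) by adding a top element $\omega^2$, regarded as a complete lattice, and let $\mathbf L=\mathbf K\times\{0,1\}$ be the product lattice (componentwise order, $0<1$). Then in the complete lattice $\mathbf L$ the element $(\omega^2,0)$ is a relative generator, but $(\omega^2,0)$ belongs to the complete sublattice generated by the set $\Gamma$ of all non-generators of $\mathbf L$. In particular, $\Gamma$ is not a complete sublattice of $\mathbf L$.
   Context: A complete lattice is a partially ordered set in which every subset (including the empty set) has a meet and a join. A complete sublattice of a complete lattice $\mathbf L$ is a subset $T\subseteq L$ closed under arbitrary meets and joins computed in $L$, including those of the empty set (so $T$ contains the minimum and maximum of $L$). For $X\subseteq L$, $\langle X\rangle$ (the complete sublattice generated by $X$) is the intersection of all complete sublattices containing $X$, and $\langle X,a\rangle=\langle X\cup\{a\}\rangle$. An element $a$ is a non-generator if for every $X\subseteq L$, $\langle X,a\rangle=L$ implies $\langle X\rangle=L$; otherwise $a$ is a relative generator. *)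

(* Defs.v *)
From Stdlib Require Import Arith.

Inductive K : Type :=
| Fin : nat -> nat -> K
| Omega2 : K.

Definition leK (x y : K) : Prop :=
  match x, y with
  | Fin m n, Fin m' n' => m < m' \/ (m = m' /\ n <= n')
  | _, Omega2 => True
  | Omega2, Fin _ _ => False
  end.

(* L = K × {0,1}, with {0,1} encoded as bool (false = 0 < true = 1),
   componentwise order. *)
Definition L : Type := (K * bool)%type.

Definition leL (x y : L) : Prop :=
  leK (fst x) (fst y) /\ (snd x = false \/ snd y = true).

(* Least upper bound / greatest lower bound of a subset of L (exist in L,
   which is a complete lattice; unique as leL is antisymmetric). *)
Definition is_join (S : L -> Prop) (x : L) : Prop :=
  (forall y, S y -> leL y x) /\
  (forall z, (forall y, S y -> leL y z) -> leL x z).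

Definition is_meet (S : L -> Prop) (x : L) : Prop :=
  (forall y, S y -> leL x y) /\
  (forall z, (forall y, S y -> leL z y) -> leL z x).

(* complete sublattice: closed under arbitrary joins and meets computed in L
   (including those of the empty subset). *)
Definition complete_sublattice (T : L -> Prop) : Prop :=
  forall S : L -> Prop, (forall y, S y -> T y) ->
    (forall x, is_join S x -> T x) /\ (forall x, is_meet S x -> T x).

Definition gen (X : L -> Prop) : L -> Prop :=
  fun x => forall T, complete_sublattice T -> (forall y, X y -> T y) -> T x.

Definition add1 (X : L -> Prop) (a : L) : L -> Prop := fun y => X y \/ y = a.

Definition generates_all (X : L -> Prop) : Prop := forall x : L, gen X x.

Definition non_generator (a : L) : Prop :=
  forall X : L -> Prop, generates_all (add1 X a) -> generates_all X.

Definition relative_generator (a : L) : Prop := ~ non_generator a.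

Definition Gamma : L -> Prop := non_generator.

(* Main.v *)
Require Import Defs.
From Stdlib Require Import Arith Lia Classical.

Lemma leK_refl k : leK k k.
Proof. destruct k; simpl; auto. Qed.

Lemma leK_trans a b c : leK a b -> leK b c -> leK a c.
Proof. destruct a, b, c; simpl; intuition (try lia). Qed.

Lemma leK_antisym a b : leK a b -> leK b a -> a = b.
Proof.
  destruct a, b; simpl; intuition (try lia); try (f_equal; lia); subst; f_equal; lia.
Qed.

Lemma leK_total a b : leK a b \/ leK b a.
Proof.
  destruct a as [m n|], b as [m' n'|]; simpl; auto.
  destruct (lt_eq_lt_dec m m') as [[h|h]|h]; [left; auto | | right; auto].
  subst; destruct (le_ge_dec n n'); [left|right]; auto.
Qed.

Definition supK (A : K -> Prop) (k : K) :=
  (forall y, A y -> leK y k) /\ (forall z, (forall y, A y -> leK y z) -> leK k z).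
Definition infK (A : K -> Prop) (k : K) :=
  (forall y, A y -> leK k y) /\ (forall z, (forall y, A y -> leK z y) -> leK z k).
Definition fimg (S : L -> Prop) (k : K) := exists y, S y /\ fst y = k.

Lemma join_fst S x : is_join S x -> supK (fimg S) (fst x).
Proof.
  intros H. split.
  - intros k [y [Hy <-]]. apply (proj1 H y Hy).
  - intros z Hz. assert (leL x (z, true)) as [h _]; auto.
    apply (proj2 H). intros y Hy. split. apply Hz; exists y; auto. right; reflexivity.
Qed.

Lemma join_snd_true S x : is_join S x -> snd x = true -> exists y, S y /\ snd y = true.
Proof.
  intros H Hx. apply NNPP; intro N.
  assert (leL x (fst x, false)) as [_ [h|h]]; simpl in *; try congruence.
  apply (proj2 H). intros y Hy. split. apply (proj1 H y Hy). left.
  destruct (snd y) eqn:E; auto. exfalso; apply N; eauto.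
Qed.

Lemma join_snd_false S x : is_join S x -> snd x = false -> forall y, S y -> snd y = false.
Proof. intros H Hx y Hy. destruct (proj1 H y Hy) as [_ [h|h]]; congruence. Qed.

Lemma mk_join S k b : supK (fimg S) k -> (b = true <-> exists y, S y /\ snd y = true) ->
  is_join S (k, b).
Proof.
  intros Hs H. split.
  - intros y Hy. split. apply (proj1 Hs). exists y; auto.
    destruct (snd y) eqn:E. right; apply H; eauto. left; auto.
  - intros z Hz. split. simpl. apply (proj2 Hs). intros k' [y [Hy <-]]. apply (Hz y Hy).
    destruct b eqn:Eb. destruct (proj1 H eq_refl) as [y [Hy Hy']].
    destruct (Hz y Hy) as [_ [h|h]]; [congruence| right; auto]. left; auto.
Qed.

Lemma meet_fst S x : is_meet S x -> infK (fimg S) (fst x).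
Proof.
  intros H. split.
  - intros k [y [Hy <-]]. apply (proj1 H y Hy).
  - intros z Hz. assert (leL (z, false) x) as [h _]; auto.
    apply (proj2 H). intros y Hy. split. apply Hz; exists y; auto. left; reflexivity.
Qed.

Lemma meet_snd_false S x : is_meet S x -> snd x = false -> exists y, S y /\ snd y = false.
Proof.
  intros H Hx. apply NNPP; intro N.
  assert (leL (fst x, true) x) as [_ [h|h]]; simpl in *; try congruence.
  apply (proj2 H). intros y Hy. split. apply (proj1 H y Hy). right.
  destruct (snd y) eqn:E; auto. exfalso; apply N; eauto.
Qed.

Lemma meet_snd_true S x : is_meet S x -> snd x = true -> forall y, S y -> snd y = true.
Proof. intros H Hx y Hy. destruct (proj1 H y Hy) as [_ [h|h]]; congruence. Qed.

Lemma mk_meet S k b : infK (fimg S) k -> (b = false <-> exists y, S y /\ snd y = false) ->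
  is_meet S (k, b).
Proof.
  intros Hs H. split.
  - intros y Hy. split. apply (proj1 Hs). exists y; auto.
    destruct b eqn:Eb; [|left; auto]. right.
    destruct (snd y) eqn:E; auto. assert (true = false) by (apply H; eauto). congruence.
  - intros z Hz. split. simpl. apply (proj2 Hs). intros k' [y [Hy <-]]. apply (Hz y Hy).
    destruct b eqn:Eb. right; auto.
    destruct (proj1 H eq_refl) as [y [Hy Hy']].
    destruct (Hz y Hy) as [_ [h|h]]; [left; auto| congruence].
Qed.

Lemma gen_cs X : complete_sublattice (gen X).
Proof.
  intros S HS. split; intros x Hx T HT HX.
  - apply (proj1 (HT S (fun y Hy => HS y Hy T HT HX))); auto.
  - apply (proj2 (HT S (fun y Hy => HS y Hy T HT HX))); auto.
Qed.

Definition W (G : L -> Prop) (c : K) (p : L) : Prop :=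
  ~ leK (fst p) c /\ exists g, G g /\ fst g = fst p /\ (snd p = false -> snd g = false).

Lemma VR_cs (G : L -> Prop) (Gcs : complete_sublattice G) (c : K) (R : K -> Prop)
  (R1 : forall k, R k -> leK k c)
  (Rj : forall A k, (forall y, A y -> R y \/ ~ leK y c) -> supK A k -> leK k c -> R k)
  (Rm : forall A k, (forall y, A y -> R y \/ ~ leK y c) -> infK A k -> leK k c -> R k) :
  complete_sublattice (fun p => R (fst p) \/ W G c p).
Proof.
  intros S HS.
  set (S' := fun g => G g /\ ~ leK (fst g) c /\
     exists s, S s /\ fst s = fst g /\ (snd s = false -> snd g = false)).
  assert (HA : forall y, fimg S y -> R y \/ ~ leK y c).
  { intros y [s [Hs <-]]. destruct (HS s Hs) as [h|[h _]]; auto. }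
  assert (HSW : forall s, S s -> ~ leK (fst s) c -> exists g, S' g /\ fst g = fst s /\
                (snd s = false -> snd g = false)).
  { intros s Hs Hn. destruct (HS s Hs) as [h|[_ [g [Hg1 [Hg2 Hg3]]]]].
    - exfalso; apply Hn; auto.
    - exists g. split; auto. split; auto. split. rewrite Hg2; auto. exists s; auto. }
  split.
  - intros [k b] Hx.
    destruct (classic (R k)) as [HR|HR]; [left; auto|right].
    pose proof (join_fst _ _ Hx) as Hsup. simpl in Hsup.
    assert (Hkc : ~ leK k c) by (intro h; apply HR; eapply Rj; eauto).
    assert (Hsup' : supK (fimg S') k).
    { split.
      - intros y [g [[Gg [Gn [s [Hs [Hs1 _]]]]] <-]]. rewrite <- Hs1. apply (proj1 Hsup). exists s; auto.
      - intros z Hz. apply (proj2 Hsup).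
        assert (Hcz : leK c z).
        { destruct (classic (exists s, S s /\ ~ leK (fst s) c)) as [[s0 [Hs0 Hn0]]|Hno].
          - destruct (HSW s0 Hs0 Hn0) as [g0 [Hg0 [Hg0e _]]].
            assert (leK (fst g0) z) by (apply Hz; exists g0; auto).
            destruct (leK_total c (fst g0)) as [h|h].
            + eapply leK_trans; eauto.
            + rewrite Hg0e in h; contradiction.
          - exfalso. apply Hkc. apply (proj2 Hsup). intros y [s [Hs <-]].
            apply NNPP; intro N; apply Hno; eauto. }
        intros y [s [Hs <-]].
        destruct (classic (leK (fst s) c)) as [h|h].
        + eapply leK_trans; eauto.
        + destruct (HSW s Hs h) as [g [Hg [Hge _]]]. rewrite <- Hge. apply Hz. exists g; auto. }
    split; [exact Hkc|].
    destruct b.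
    + destruct (classic (exists g, S' g /\ snd g = true)) as [Ht|Hf].
      * exists (k, true). split; [|simpl; split; auto; discriminate].
        apply (proj1 (Gcs S' (fun g Hg => proj1 Hg))). apply mk_join; auto. split; auto.
      * exists (k, false). split; [|simpl; split; auto; discriminate].
        apply (proj1 (Gcs S' (fun g Hg => proj1 Hg))). apply mk_join; auto.
        split; [discriminate|]. intro h; contradiction.
    + exists (k, false). split; [|simpl; split; auto].
      apply (proj1 (Gcs S' (fun g Hg => proj1 Hg))). apply mk_join; auto.
      split; [discriminate|]. intros [g [[_ [_ [s [Hs [_ Hs3]]]]] Hg]].
      rewrite (Hs3 (join_snd_false _ _ Hx eq_refl s Hs)) in Hg. discriminate.
  - intros [k b] Hx.
    destruct (classic (R k)) as [HR|HR]; [left; auto|right].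
    pose proof (meet_fst _ _ Hx) as Hinf. simpl in Hinf.
    assert (Hkc : ~ leK k c) by (intro h; apply HR; eapply Rm; eauto).
    assert (Hall : forall s, S s -> ~ leK (fst s) c).
    { intros s Hs h. apply Hkc. eapply leK_trans; [|exact h]. apply (proj1 Hinf). exists s; auto. }
    assert (Hinf' : infK (fimg S') k).
    { split.
      - intros y [g [[Gg [Gn [s [Hs [Hs1 _]]]]] <-]]. rewrite <- Hs1. apply (proj1 Hinf). exists s; auto.
      - intros z Hz. apply (proj2 Hinf). intros y [s [Hs <-]].
        destruct (HSW s Hs (Hall s Hs)) as [g [Hg [Hge _]]]. rewrite <- Hge. apply Hz. exists g; auto. }
    split; [exact Hkc|].
    destruct b.
    + destruct (classic (exists g, S' g /\ snd g = false)) as [Ht|Hf].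
      * exists (k, false). split; [|simpl; split; auto; discriminate].
        apply (proj2 (Gcs S' (fun g Hg => proj1 Hg))). apply mk_meet; auto. split; auto.
      * exists (k, true). split; [|simpl; split; auto; discriminate].
        apply (proj2 (Gcs S' (fun g Hg => proj1 Hg))). apply mk_meet; auto.
        split; [discriminate|]. intro h; contradiction.
    + exists (k, false). split; [|simpl; split; auto].
      apply (proj2 (Gcs S' (fun g Hg => proj1 Hg))). apply mk_meet; auto.
      split; [|intros; reflexivity]. intros _.
      destruct (meet_snd_false _ _ Hx eq_refl) as [s [Hs Hsf]].
      destruct (HSW s Hs (Hall s Hs)) as [g [Hg [_ Hg3]]]. exists g; auto.
Qed.

Lemma nongen M (HM : 1 <= M) : non_generator (Fin M 0, false).
Proof.
  intros X HX.
  set (c := Fin M 0). set (a := (c, false)).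
  set (G := gen X).
  assert (Gcs : complete_sublattice G) by apply gen_cs.
  assert (Hall : forall V, complete_sublattice V -> (forall p, G p -> V p) -> V a -> forall p, V p).
  { intros V HV HG Ha p. apply (HX p V HV). intros y [Hy| ->]; auto.
    apply HG. intros T HT HXT. auto. }
  assert (Ga : G a).
  {
    set (e := (Fin M 1, false)).
    assert (Ge : G e).
    { pose proof (Hall (fun p => leK (fst p) c \/ W G c p)) as H1.
      destruct (H1 (VR_cs G Gcs c (fun k => leK k c) (fun k h => h)
                 (fun A k _ _ h => h) (fun A k _ _ h => h))) with (p := e) as [h|h].
      - intros p Gp. destruct (classic (leK (fst p) c)); [left; auto|right].
        split; auto. exists p; auto.
      - left. apply leK_refl.
      - simpl in h. lia.
      - destruct h as [_ [g [Gg [Hg1 Hg2]]]].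
        destruct g as [k b]. simpl in *. subst k. rewrite Hg2 in Gg; auto. }
    assert (Hcof : forall d, leK d c -> d <> c -> exists g, G g /\ ~ leK (fst g) d /\
                    leK (fst g) c /\ fst g <> c).
    { intros d Hdc Hdn. apply NNPP; intro N.
      set (R := fun k => leK k d \/ k = c).
      assert (R1 : forall k, R k -> leK k c).
      { intros k [h|h]. eapply leK_trans; eauto. subst; apply leK_refl. }
      assert (Rj : forall A k, (forall y, A y -> R y \/ ~ leK y c) -> supK A k -> leK k c -> R k).
      { intros A k HA Hs Hk. destruct (classic (k = c)) as [h|h]; [right; auto|left].
        apply (proj2 Hs). intros y Hy. pose proof (proj1 Hs y Hy) as Hyk.
        destruct (HA y Hy) as [[h1|h1]|h1]; auto.
        - subst. exfalso; apply h; apply leK_antisym; auto.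
        - exfalso; apply h1; eapply leK_trans; eauto. }
      assert (Rm : forall A k, (forall y, A y -> R y \/ ~ leK y c) -> infK A k -> leK k c -> R k).
      { intros A k HA Hs Hk. destruct (classic (leK k d)) as [h|h]; [left; auto|right].
        apply leK_antisym; auto. apply (proj2 Hs). intros y Hy.
        destruct (HA y Hy) as [[h1|h1]|h1].
        - exfalso; apply h; eapply leK_trans; [apply (proj1 Hs y Hy)|]; auto.
        - subst; apply leK_refl.
        - destruct (leK_total c y); auto; contradiction. }
      destruct d as [m n|]; [|simpl in Hdc; contradiction].
      assert (Hm : m < M) by (unfold c in Hdc, Hdn; simpl in Hdc; destruct Hdc as [h|[h1 h2]]; auto;
        exfalso; apply Hdn; subst; f_equal; lia).
      destruct (Hall _ (VR_cs G Gcs c R R1 Rj Rm)) with (p := (Fin m (S n), false)) as [h|h].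
      - intros p Gp. destruct (classic (leK (fst p) c)) as [h|h].
        + left. destruct (classic (fst p = c)) as [h2|h2]; [right; auto|left].
          apply NNPP; intro h3. apply N. exists p; auto.
        + right. split; auto. exists p; auto.
      - left; right; reflexivity.
      - destruct h as [h|h]; simpl in h; [lia|]. unfold c in h. injection h; lia.
      - destruct h as [h _]. apply h. simpl. left; lia. }
    set (S3 := fun g => G g /\ leK (fst g) c /\ fst g <> c).
    assert (Hsup : supK (fimg S3) c).
    { split.
      - intros y [g [[_ [h _]] <-]]; auto.
      - intros z Hz. destruct (leK_total c z) as [h|h]; auto.
        destruct (classic (z = c)) as [h2|h2]; [subst; apply leK_refl|].
        destruct (Hcof z h h2) as [g [Gg [Hg1 [Hg2 Hg3]]]].
        exfalso; apply Hg1. apply Hz. exists g; repeat split; auto. }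
    destruct (classic (exists g, S3 g /\ snd g = true)) as [Ht|Hf].
    - assert (Gct : G (c, true)).
      { apply (proj1 (Gcs S3 (fun g Hg => proj1 Hg))). apply mk_join; auto. split; auto. }
      set (S4 := fun y => y = (c, true) \/ y = e).
      assert (HS4 : forall y, S4 y -> G y) by (intros y [-> | ->]; auto).
      apply (proj2 (Gcs S4 HS4)).
      apply mk_meet.
      + split.
        * intros y [g [[-> | ->] <-]]; unfold c; simpl; lia.
        * intros z Hz. apply Hz. exists (c, true). split; [left|]; auto.
      + split; auto. intros _. exists e. split; [right|]; auto.
    - apply (proj1 (Gcs S3 (fun g Hg => proj1 Hg))). apply mk_join; auto.
      split; [discriminate|]. intro h; contradiction. }
  intros p. apply (HX p G Gcs). intros y [Hy| ->]; auto.
  intros T HT HXT; auto.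
Qed.

Lemma leK_00 k : leK k (Fin 0 0) -> k = Fin 0 0.
Proof. destruct k; simpl; intros h; [f_equal; lia|contradiction]. Qed.

Lemma relgen : relative_generator (Omega2, false).
Proof.
  intro H.
  set (X := fun p : L => snd p = true).
  set (T0 := fun p : L => snd p = true \/ p = (Fin 0 0, false)).
  assert (T0cs : complete_sublattice T0).
  { intros S HS. split.
    - intros [k b] Hx. destruct b; [left; reflexivity|right].
      pose proof (join_snd_false _ _ Hx eq_refl) as Hf.
      f_equal. apply leK_00. apply (proj2 (join_fst _ _ Hx)).
      intros y [s [Hs <-]]. destruct (HS s Hs) as [h| ->].
      + rewrite (Hf s Hs) in h; discriminate.
      + apply leK_refl.
    - intros [k b] Hx. destruct b; [left; reflexivity|right].
      destruct (meet_snd_false _ _ Hx eq_refl) as [s [Hs Hsf]].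
      destruct (HS s Hs) as [h| ->]; [congruence|].
      f_equal. apply leK_00. apply (proj1 (meet_fst _ _ Hx)). exists (Fin 0 0, false); auto. }
  assert (Hg : generates_all (add1 X (Omega2, false))).
  { intros [k b] T HT HXT. destruct b. apply HXT. left; reflexivity.
    set (S := fun y : L => y = (k, true) \/ y = (Omega2, false)).
    apply (proj2 (HT S (fun y Hy => match Hy with
                                   | or_introl h => HXT y (or_introl (f_equal snd h))
                                   | or_intror h => HXT y (or_intror h) end))).
    apply mk_meet.
    - split.
      + intros y [g [[-> | ->] <-]]; simpl. apply leK_refl. destruct k; exact I.
      + intros z Hz. apply Hz. exists (k, true). split; [left|]; auto.
    - split; auto. intros _. exists (Omega2, false). split; [right|]; auto. }
  pose proof (H X Hg (Omega2, false) T0 T0cs) as h.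
  destruct h as [h|h]; [intros y Hy; left; exact Hy|discriminate|discriminate].
Qed.

Lemma genGamma : gen Gamma (Omega2, false).
Proof.
  intros T HT HG.
  set (S5 := fun y : L => exists M, 1 <= M /\ y = (Fin M 0, false)).
  assert (HS5 : forall y, S5 y -> T y).
  { intros y [M [hM ->]]. apply HG. apply nongen; auto. }
  apply (proj1 (HT S5 HS5)).
  apply mk_join.
  - split.
    + intros y _; destruct y; exact I.
    + intros z Hz. destruct z as [m n|]; [|exact I].
      assert (h : leK (Fin (S m) 0) (Fin m n)).
      { apply Hz. exists (Fin (S m) 0, false). split; auto. exists (S m); split; auto; lia. }
      simpl in h; lia.
  - split; [discriminate|]. intros [y [[M [_ ->]] h]]; discriminate.
Qed.

Theorem theorem4 :
  relative_generator (Omega2, false) /\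
  gen Gamma (Omega2, false) /\
  ~ complete_sublattice Gamma.
Proof.
  split; [exact relgen|]. split; [exact genGamma|].
  intro Hcs. apply relgen. apply (genGamma Gamma Hcs). auto.
Qed.
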